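(* Let $m,n_1,n_2\in\mathbb{N}$ with $m\ge1$. For $i=1,2$ let $\ell_i:V_i\to\mathbb{Z}_m$ be a $\mathbb{Z}_m$-cordial labeling of the friendship graph $F_{n_i}$ with the central vertex labeled $0$. Assume moreover that the labeling $\ell_2$ of $F_{n_2}$ has vertex and edge frequency distributions $f_{V_2}(0)=r+1$, $f_{V_2}(i)=r$ for all $i\ne0$, and $f_{E_2}(j)=s$ for all $j\in\mathbb{Z}_m$, for some integers $r,s$. Then the labeling $F_{n_1}+F_{n_2}$ of $F_{n_1+n_2}$ is $\mathbb{Z}_m$-cordial.
   Context: For $n\in\mathbb{N}$, the friendship graph $F_n$ is the union of $n$ copies of the triangle $C_3$ joined at a single common (central) vertex. For labelings $\ell_i$ of $F_{n_i}$ ($i=1,2$) both labeling the central vertex $0$, $F_{n_1}+F_{n_2}$ denotes the labeling of $F_{n_1+n_2}$ whose central vertex is labeled $0$, whose first $n_1$ triangles are labeled as by $\ell_1$ and whose remaining $n_2$ triangles are labeled as by $\ell_2$. For an abelian group $A$ and a graph $G=(V,E)$, a vertex labeling $\ell:V\to A$ induces an edge labeling $\ell(\{v_1,v_2\})=\ell(v_1)+\ell(v_2)$. Let $f_V(a)=|\{v\in V:\ell(v)=a\}|$ and $f_E(a)=|\{e\in E:\ell(e)=a\}|$. The labeling is $A$-cordial if $|f_V(a_1)-f_V(a_2)|\le 1$ and $|f_E(a_1)-f_E(a_2)|\le 1$ for all $a_1,a_2\in A$. *)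

(* Defs.v *)
From mathcomp Require Import all_boot all_order all_algebra.
Set Implicit Arguments. Unset Strict Implicit. Unset Printing Implicit Defensive.
Import GRing.Theory.
Local Open Scope ring_scope.

(* Z_m for m >= 1: the ordinal type 'I_m, written 'I_(m.-1).+1 so that it
   carries MathComp's additive group structure (Z/mZ). *)
Definition Zm (m : nat) : finZmodType := 'I_(m.-1).+1.

(* Vertices of the friendship graph F_n: None = central vertex,
   Some (k, b) = the two non-central vertices (b = false/true) of triangle k. *)
Definition fvert (n : nat) : finType := option ('I_n * bool).

(* Edges of F_n: for triangle k, (k,0) and (k,1) are the two spokes from the
   centre, (k,2) is the edge between the two outer vertices. *)
Definition fedge (n : nat) : finType := ('I_n * 'I_3)%type.

Definition fends (n : nat) (e : fedge n) : fvert n * fvert n :=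
  let k := e.1 in
  match val e.2 with
  | 0%N => (None, Some (k, false))
  | 1%N => (None, Some (k, true))
  | _ => (Some (k, false), Some (k, true))
  end.

Section Freq.
Variables (m n : nat) (l : fvert n -> Zm m).

Definition elab (e : fedge n) : Zm m := l (fends e).1 + l (fends e).2.

Definition fV (a : Zm m) : nat := #|[set v : fvert n | l v == a]|.
Definition fE (a : Zm m) : nat := #|[set e : fedge n | elab e == a]|.

Definition cordial : Prop :=
  (forall a1 a2 : Zm m, (fV a1 <= (fV a2).+1)%N) /\
  (forall a1 a2 : Zm m, (fE a1 <= (fE a2).+1)%N).
End Freq.

Definition fsum (m n1 n2 : nat) (l1 : fvert n1 -> Zm m) (l2 : fvert n2 -> Zm m)
  : fvert (n1 + n2) -> Zm m :=
  fun v => match v with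
  | None => 0
  | Some (i, b) =>
      match split i with
      | inl j => l1 (Some (j, b))
      | inr j => l2 (Some (j, b))
      end
  end.

(* Main.v *)
Require Import Defs.
From mathcomp Require Import all_boot all_order all_algebra.
From mathcomp Require Import zify.
Local Open Scope ring_scope.

Lemma sum_opt (T : finType) (F : option T -> nat) :
  (\sum_(v : option T) F v = F None + \sum_(x : T) F (Some x))%N.
Proof.
rewrite [LHS](bigD1 None) //=; congr (_ + _)%N.
rewrite (reindex_omap Some (fun v => v)) //=; last by case.
by apply: eq_bigl => j; rewrite eqxx.
Qed.

Lemma card_sum (T : finType) (P : pred T) :
  #|[set x | P x]| = (\sum_x (P x : nat))%N.
Proof.
rewrite -sum1_card big_mkcond /=; apply: eq_bigr => x _; by rewrite inE; case: (P x).
Qed.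

Lemma sum_pair (I J : finType) (F : I * J -> nat) :
  (\sum_(p : I * J) F p = \sum_(i : I) \sum_(j : J) F (i, j))%N.
Proof. by rewrite pair_bigA; apply: eq_bigr => -[]. Qed.

Lemma split_lshift m n (i : 'I_m) : split (lshift n i) = inl i.
Proof. exact: (unsplitK (inl _ i)). Qed.
Lemma split_rshift m n (i : 'I_n) : split (rshift m i) = inr i.
Proof. exact: (unsplitK (inr _ i)). Qed.

Lemma fV_sum m n1 n2 (l1 : fvert n1 -> Zm m) (l2 : fvert n2 -> Zm m) a :
  l1 None = 0 -> l2 None = 0 ->
  (fV (fsum l1 l2) a + ((0%R : Zm m) == a) = fV l1 a + fV l2 a)%N.
Proof.
move=> h1 h2; rewrite /fV !card_sum !sum_opt !sum_pair big_split_ord /= h1 h2.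
under eq_bigr do under eq_bigr do rewrite split_lshift.
under [X in (_ + (_ + X))%N]eq_bigr do under eq_bigr do rewrite split_rshift.
set A := (\sum_(i < n1) _)%N; set B := (\sum_(i < n2) _)%N.
set c := (_ == a). rewrite -[X in (_ + X = _)%N]/(nat_of_bool c). lia.
Qed.

Lemma fE_sum m n1 n2 (l1 : fvert n1 -> Zm m) (l2 : fvert n2 -> Zm m) a :
  l1 None = 0 -> l2 None = 0 ->
  (fE (fsum l1 l2) a = fE l1 a + fE l2 a)%N.
Proof.
move=> h1 h2; rewrite /fE !card_sum !sum_pair big_split_ord /=.
congr (_ + _)%N; apply: eq_bigr => i _; apply: eq_bigr => -[[|[|k]] Hk] _;
  rewrite /elab /fends /= ?split_lshift ?split_rshift ?h1 ?h2 //.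
Qed.

Theorem lemma8p2 (m n1 n2 : nat) (l1 : fvert n1 -> Zm m) (l2 : fvert n2 -> Zm m)
  (r s : nat) :
  (1 <= m)%N ->
  cordial l1 -> l1 None = 0 ->
  cordial l2 -> l2 None = 0 ->
  fV l2 0 = r.+1 ->
  (forall i : Zm m, i != 0 -> fV l2 i = r) ->
  (forall j : Zm m, fE l2 j = s) ->
  cordial (fsum l1 l2).
Proof.
move=> _ [cV cE] h1 _ h2 hV0 hV hE.
have V : forall a, fV (fsum l1 l2) a = (fV l1 a + r)%N.
  move=> a; have := @fV_sum _ _ _ l1 l2 a h1 h2.
  case: (eqVneq a 0) => [->|na]; first by rewrite hV0 /=; lia.
  by rewrite hV //; lia.
split=> a1 a2.
  by rewrite !V; have := cV a1 a2; lia.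
by rewrite !fE_sum //  !hE; have := cE a1 a2; lia.
Qed.
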